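(* Let $\Phi=(A;A^*;\{E_i\}_{i=0}^d;\{E^*_i\}_{i=0}^d)$ be a Leonard system in $\mathcal A$, with scalars $x_i$ and polynomials $p_i$ as defined below. Then $x_1,\dots,x_d$ are nonzero and $$E^*_i=\frac{p_i(A)E^*_0p_i(A)}{x_1x_2\cdots x_i}\qquad(0\le i\le d).$$
   Context: Let $\mathbb K$ be a field, $d\ge 0$ an integer, and $\mathcal A$ a $\mathbb K$-algebra isomorphic to $\mathrm{Mat}_{d+1}(\mathbb K)$, with identity $I$ and trace $\mathrm{tr}$. An element $A\in\mathcal A$ is multiplicity-free if it has $d+1$ mutually distinct eigenvalues in $\mathbb K$; if $\theta_0,\dots,\theta_d$ is an ordering of them, the primitive idempotent of $A$ associated with $\theta_i$ is $E_i=\prod_{j\ne i}(A-\theta_jI)/(\theta_i-\theta_j)$. A Leonard system in $\mathcal A$ is a sequence $\Phi=(A;A^*;\{E_i\}_{i=0}^d;\{E^*_i\}_{i=0}^d)$ such that: (i) $A,A^*$ are multiplicity-free; (ii) $E_0,\dots,E_d$ is an ordering of the primitive idempotents of $A$; (iii) $E^*_0,\dots,E^*_d$ is an ordering of those of $A^*$; (iv) $E_iA^*E_j=0$ if $|i-j|>1$ and $\ne0$ if $|i-j|=1$ $(0\le i,j\le d)$; (v) $E^*_iAE^*_j=0$ if $|i-j|>1$ and $\neq0$ if $|i-j|=1$ $(0\le i,j\le d)$. Define $a_i=\mathrm{tr}(E^*_iA)$ $(0\le i\le d)$, $x_i=\mathrm{tr}(E^*_iAE^*_{i-1}A)$ $(1\le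 i\le d)$, $x_0=0$, and polynomials $p_0,\dots,p_{d+1}\in\mathbb K[\lambda]$ by $p_0=1$, $p_{-1}=0$, $\lambda p_i=p_{i+1}+a_ip_i+x_ip_{i-1}$ $(0\le i\le d)$. The empty product $x_1\cdots x_0$ equals $1$. *)

(* Defs.v *)
From HB Require Import structures.
From mathcomp Require Import all_boot all_order all_algebra.
Set Implicit Arguments. Unset Strict Implicit. Unset Printing Implicit Defensive.
Import Order.TTheory GRing.Theory Num.Theory.
Local Open Scope ring_scope.

(* The algebra A ~ Mat_{d+1}(K) is taken to be 'M[K]_(d.+1) itself;
   its trace is the matrix trace \tr. *)

Section Leonard.
Variables (K : fieldType) (d : nat).
Notation MA := 'M[K]_(d.+1).

Definition eigen_ordering (A : MA) (th : 'I_(d.+1) -> K) : Prop :=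
  injective th /\ forall i, eigenvalue A (th i).

Definition mult_free (A : MA) : Prop := exists th, eigen_ordering A th.

Definition prim_idem (A : MA) (th : 'I_(d.+1) -> K) (i : 'I_(d.+1)) : MA :=
  \prod_(j < d.+1 | j != i) ((th i - th j)^-1 *: (A - (th j)%:M)).

Definition idem_ordering (A : MA) (E : 'I_(d.+1) -> MA) : Prop :=
  exists th, eigen_ordering A th /\ forall i, E i = prim_idem A th i.

Definition tridiag (E : 'I_(d.+1) -> MA) (B : MA) : Prop :=
  forall i j : 'I_(d.+1),
    ((i.+1 < j)%N \/ (j.+1 < i)%N -> E i *m B *m E j = 0) /\
    ((i.+1 == j)%N \/ (j.+1 == i)%N -> E i *m B *m E j != 0).

Definition leonard_system (A As : MA) (E Es : 'I_(d.+1) -> MA) : Prop :=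
  mult_free A /\ mult_free As /\ idem_ordering A E /\ idem_ordering As Es /\
  tridiag E As /\ tridiag Es A.

Definition LS_a (A : MA) (Es : 'I_(d.+1) -> MA) (n : nat) : K :=
  \tr (Es (inord n) *m A).

Definition LS_x (A : MA) (Es : 'I_(d.+1) -> MA) (n : nat) : K :=
  if n is k.+1 then \tr (Es (inord n) *m A *m Es (inord k) *m A) else 0.

(* pair (p_n, p_{n-1}), with p_0 = 1, p_{-1} = 0,
   p_{i+1} = (lambda - a_i) p_i - x_i p_{i-1} *)
Fixpoint LS_pp (A : MA) (Es : 'I_(d.+1) -> MA) (n : nat) : {poly K} * {poly K} :=
  match n with
  | 0 => (1, 0)
  | k.+1 => let (pk, pk1) := LS_pp A Es k in
            (('X - (LS_a A Es k)%:P) * pk - (LS_x A Es k) *: pk1, pk)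
  end.

Definition LS_p (A : MA) (Es : 'I_(d.+1) -> MA) (n : nat) : {poly K} :=
  (LS_pp A Es n).1.

End Leonard.

(* Main.v *)
Require Import Defs.
From HB Require Import structures.
From mathcomp Require Import all_boot all_order all_algebra.
Import GRing.Theory.
Local Open Scope ring_scope.

Section Part1.
Variables (K : fieldType) (d : nat).
Local Notation n := d.+1.
Local Notation MA := 'M[K]_n.

Lemma eig_prim (As : MA) (th : 'I_n -> K) k (v : 'rV[K]_n) a :
  v *m As = a *: v ->
  v *m prim_idem As th k =
  (\prod_(j < n | j != k) ((th k - th j)^-1 * (a - th j))) *: v.
Proof.
move=> Hv; rewrite /prim_idem.
apply: (big_ind2 (fun (M : MA) c => v *m M = c *: v)).
- by rewrite mulmx1 scale1r.
- move=> M1 c1 M2 c2 H1 H2; rewrite -mulmxE mulmxA H1 -scalemxAl H2 scalerA mulrC.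
  by [].
- move=> j _; rewrite -scalemxAr mulmxBr Hv mul_mx_scalar -scalerBl scalerA.
  by [].
Qed.

Lemma eig_prim_delta (As : MA) th (v : 'I_n -> 'rV[K]_n) :
  injective th -> (forall j, v j *m As = th j *: v j) ->
  forall j k, v j *m prim_idem As th k = (j == k)%:R *: v j.
Proof.
move=> inj Hv j k; rewrite (@eig_prim As th k (v j) (th j) (Hv j)).
case: eqP => [->|/eqP jk].
  rewrite big1 ?scale1r // => l lk; rewrite mulVf // subr_eq0.
  by apply/eqP => /inj /eqP; rewrite eq_sym (negPf lk).
have kj : k != j by rewrite eq_sym.
rewrite (bigD1 j jk) /=.
by rewrite subrr mulr0 mul0r.
Qed.

Lemma delta11 (i j : 'I_1) : delta_mx i j = 1%:M :> 'M[K]_1.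
Proof. by rewrite (ord1 i) (ord1 j); apply/matrixP => a b; rewrite !ord1 !mxE. Qed.

Lemma sum_delta_diag : \sum_(k < n) delta_mx k k = 1%:M :> MA.
Proof.
apply/matrixP => i j; rewrite summxE (bigD1 i) //= big1 ?addr0.
  by rewrite !mxE eqxx /= eq_sym.
by move=> k ki; rewrite mxE eq_sym (negPf ki).
Qed.

Lemma rank1_decomp (As : MA) (Es : 'I_n -> MA) :
  idem_ordering As Es ->
  exists (u : 'I_n -> 'M[K]_(n, 1)) (w : 'I_n -> 'M[K]_(1, n)),
    [/\ forall k, Es k = u k *m w k,
        forall j k, w j *m u k = (j == k)%:R%:M &
        \sum_k Es k = 1%:M].
Proof.
case=> th [[inj eig] HE].
have /all_sig [v Hv] : forall j, {v : 'rV[K]_n | (v *m As == th j *: v) && (v != 0)}.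
  move=> j; apply: sigW; have /eigenvalueP [v H1 H2] := eig j.
  by exists v; rewrite H1 eqxx.
have Hv1 j : v j *m As = th j *: v j by case/andP: (Hv j) => /eqP.
have Hv2 j : v j != 0 by case/andP: (Hv j).
have HvE j k : v j *m Es k = (j == k)%:R *: v j.
  by rewrite HE; apply: eig_prim_delta.
pose V := \matrix_j v j.
have HVE k : V *m Es k = delta_mx k (@ord0 0) *m (delta_mx (@ord0 0) k *m V).
  apply/row_matrixP => j; rewrite row_mul rowK HvE.
  rewrite rowE !mulmxA mul_delta_mx_cond delta11 -scaler_nat -!scalemxAl mul1mx -rowE rowK.
  by case: eqP => [->|]; rewrite ?scale0r.
have Vu : V \in unitmx.
  rewrite -row_free_unit; apply: inj_row_free => c Hc.
  apply/rowP => i; have := congr1 (mulmx^~ (Es i)) Hc.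
  rewrite mul0mx -mulmxA HVE mulmxA -rowE rowK.
  rewrite [c *m _]mx11_scalar mul_scalar_mx => /eqP.
  rewrite scaler_eq0 (negPf (Hv2 i)) orbF mxE => /eqP.
  rewrite (bigD1 i) //= big1 ?addr0; first by rewrite mxE eqxx mulr1 mxE.
  by move=> l li; rewrite mxE (negPf li) mulr0.
exists (fun k => invmx V *m delta_mx k (@ord0 0)), (fun k => delta_mx (@ord0 0) k *m V).
split.
- move=> k; by rewrite -[Es k]mul1mx -(mulVmx Vu) -mulmxA HVE !mulmxA.
- move=> j k; rewrite mulmxA -(mulmxA _ V) (mulmxV Vu) mulmx1.
  rewrite mul_delta_mx_cond delta11; case: (j == k) => /=; first by rewrite mulr1n.
  by rewrite mulr0n -scalemx1 scale0r.
- have H : forall k, Es k = invmx V *m delta_mx k k *m V.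
    move=> k; have := HVE k; move/(congr1 (mulmx (invmx V))).
    rewrite [invmx V *m (V *m _)]mulmxA (mulVmx Vu) mul1mx => ->.
    by rewrite mulmxA -(mulmxA (invmx V)) mul_delta_mx.
  under eq_bigr do rewrite H.
  by rewrite -mulmx_suml -mulmx_sumr sum_delta_diag mulmx1 (mulVmx Vu).
Qed.

End Part1.

Section Rank1.
Variables (K : fieldType) (n : nat).

Lemma outer_neq0 n0 m (c : 'M[K]_(n0, 1)) (r : 'M[K]_(1, m)) :
  c != 0 -> r != 0 -> c *m r != 0.
Proof.
move=> c0 r0; apply/negP => /eqP cr.
have [i ci] : exists i, c i 0 != 0.
  apply/existsP; apply: contraR c0 => /existsPn H.
  by apply/eqP/matrixP => a b; rewrite (ord1 b) mxE; apply/eqP; rewrite -[_ == _]negbK H.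
have [j rj] : exists j, r 0 j != 0.
  apply/existsP; apply: contraR r0 => /existsPn H.
  by apply/eqP/matrixP => a b; rewrite (ord1 a) mxE; apply/eqP; rewrite -[_ == _]negbK H.
have := congr1 (fun M : 'M[K]_(n0, m) => M i j) cr; rewrite !mxE big_ord1 => /eqP.
by rewrite mulf_eq0 (negPf ci) (negPf rj).
Qed.

Variables (E : 'I_n -> 'M[K]_n) (u : 'I_n -> 'M[K]_(n, 1)) (w : 'I_n -> 'M[K]_(1, n)).
Hypothesis Hu : forall k, E k = u k *m w k.
Hypothesis Hw : forall j k, w j *m u k = (j == k)%:R%:M.

Lemma E_mul i j : E i *m E j = (i == j)%:R *: E j.
Proof.
rewrite !Hu mulmxA -(mulmxA (u i)) Hw mul_mx_scalar -scalemxAl.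
by case: eqP => [->|]; rewrite ?scale1r ?scale0r.
Qed.

Lemma E_idem i : E i *m E i = E i.
Proof. by rewrite E_mul eqxx scale1r. Qed.

Lemma E_orth i j : i != j -> E i *m E j = 0.
Proof. by move=> /negPf ij; rewrite E_mul ij scale0r. Qed.

Lemma E_sand i (X : 'M[K]_n) : E i *m X *m E i = \tr (E i *m X) *: E i.
Proof.
rewrite !Hu -mulmxA mxtrace_mulC !mulmxA -!(mulmxA (u i)).
rewrite -(mulmxA (w i)) [w i *m _]mx11_scalar mul_scalar_mx -scalemxAr; congr (_ *: _).
by rewrite mxtrace_mulC /mxtrace big_ord1.
Qed.

Lemma E_nz i m p (B : 'M[K]_(m, n)) (C : 'M[K]_(n, p)) :
  B *m E i != 0 -> E i *m C != 0 -> B *m E i *m C != 0.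
Proof.
rewrite !Hu => H1 H2; rewrite mulmxA -(mulmxA _ (w i)); apply: outer_neq0.
  apply/negP => /eqP Bu0; move/negP: H1; apply; by rewrite mulmxA Bu0 mul0mx.
apply/negP => /eqP wC0; move/negP: H2; apply; by rewrite -mulmxA wC0 mulmx0.
Qed.

End Rank1.
From mathcomp Require Import zify.

Lemma sum3 (V : zmodType) (G : nat -> V) d i : (i < d)%N ->
  (forall j, (j <= d)%N -> (i.+1 < j)%N \/ (j.+1 < i)%N -> G j = 0) ->
  \sum_(0 <= j < d.+1) G j = G i.+1 + G i + (if i is k.+1 then G k else 0).
Proof.
move=> id H0; have h2 : (i.+2 <= d.+1)%N by lia.
rewrite (big_cat_nat _ (n := i.+2)) //=.
rewrite [X in _ + X]big1_seq ?addr0; last first.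
  move=> j; rewrite mem_index_iota => /andP [j1 j2]; apply: H0; lia.
have HS : \sum_(0 <= j < i) G j = (if i is k.+1 then G k else 0).
  clear h2; case: i id H0 => [|k] id H0; first by rewrite big_geq.
  rewrite big_nat_recr //= big1_seq ?add0r // => j.
  rewrite mem_index_iota => /andP [j1 j2]; apply: H0; lia.
rewrite !big_nat_recr //= HS.
set T := (if i is k.+1 then G k else 0).
by rewrite addrC (addrC T) addrA.
Qed.

Section Main.
Variables (K : fieldType) (d : nat).
Local Notation n := d.+1.
Local Notation MA := 'M[K]_n.
Variables (A : MA) (Es : 'I_n -> MA).
Hypothesis Hidem : forall i, Es i *m Es i = Es i.
Hypothesis Hsand : forall i X, Es i *m X *m Es i = \tr (Es i *m X) *: Es i.
Hypothesis Hsum : \sum_i Es i = 1%:M.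
Hypothesis Htri : tridiag Es A.
Hypothesis Hnz : forall i m p (B : 'M[K]_(m, n)) (C : 'M[K]_(n, p)),
  B *m Es i != 0 -> Es i *m C != 0 -> B *m Es i *m C != 0.

Local Notation F k := (Es (inord k)).

Fixpoint Mseq k := if k is k'.+1 then F k *m A *m Mseq k' else F 0.
Definition Mprev k := if k is k'.+1 then Mseq k' else 0.
Fixpoint Nseq k := if k is k'.+1 then Nseq k' *m A *m F k else F 0.
Definition Nprev k := if k is k'.+1 then Nseq k' else 0.

Lemma tri0 i j : (i <= d)%N -> (j <= d)%N -> (i.+1 < j)%N \/ (j.+1 < i)%N ->
  F i *m A *m F j = 0.
Proof.
move=> id jd H; apply: (Htri (inord i) (inord j)).1.
by rewrite !inordK.
Qed.

Lemma trinz k : (k < d)%N -> F k *m A *m F k.+1 != 0 /\ F k.+1 *m A *m F k != 0.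
Proof.
move=> kd; split.
  by apply: (Htri (inord k) (inord k.+1)).2; left; rewrite !inordK //; lia.
by apply: (Htri (inord k.+1) (inord k)).2; right; rewrite !inordK //; lia.
Qed.

Lemma Ta k : F k *m A *m F k = LS_a A Es k *: F k.
Proof. by rewrite Hsand. Qed.

Lemma Tx k : F k *m A *m F k.+1 *m A *m F k = LS_x A Es k.+1 *: F k.
Proof.
rewrite -(mulmxA (F k *m A)) -(mulmxA (F k)) Hsand /LS_x; congr (_ *: _).
rewrite !mulmxA -(mulmxA (F k *m A)) mxtrace_mulC.
by rewrite !mulmxA.
Qed.

Lemma FM i : F i *m Mseq i = Mseq i.
Proof. by case: i => [|k] /=; rewrite ?Hidem // !mulmxA Hidem. Qed.

Lemma NF i : Nseq i *m F i = Nseq i.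
Proof. by case: i => [|k] /=; rewrite ?Hidem // -!mulmxA Hidem. Qed.

Lemma sumF : \sum_(0 <= j < d.+1) F j = 1%:M.
Proof.
rewrite big_mkord -Hsum; apply: eq_bigr => j _; by rewrite inord_val.
Qed.

Lemma AM i : (i < d)%N ->
  A *m Mseq i = Mseq i.+1 + LS_a A Es i *: Mseq i + LS_x A Es i *: Mprev i.
Proof.
move=> id.
rewrite -[A *m _]mul1mx -sumF mulmx_suml.
rewrite (@sum3 _ (fun j => F j *m (A *m Mseq i)) d i id); last first.
  move=> j jd H; rewrite -FM !mulmxA tri0 ?mul0mx //; lia.
rewrite /= mulmxA; congr (_ + _ + _).
  by rewrite -{1}FM !mulmxA Ta -scalemxAl FM.
case: i id => [|k] id /=; first by rewrite scale0r.
rewrite -FM !mulmxA Tx -scalemxAl FM.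
by [].
Qed.

Lemma NA i : (i < d)%N ->
  Nseq i *m A = Nseq i.+1 + LS_a A Es i *: Nseq i + LS_x A Es i *: Nprev i.
Proof.
move=> id.
rewrite -[Nseq i *m A]mulmx1 -sumF mulmx_sumr.
rewrite (@sum3 _ (fun j => Nseq i *m A *m F j) d i id); last first.
  move=> j jd H; rewrite -NF -!mulmxA (mulmxA (F i)) tri0 ?mul0mx ?mulmx0 //; lia.
rewrite /=; congr (_ + _ + _).
  by rewrite -{1}NF -!mulmxA (mulmxA (F i)) Ta -scalemxAr NF.
case: i id => [|k] id /=; first by rewrite scale0r.
rewrite -NF -!mulmxA; have := Tx k; rewrite -!mulmxA => ->.
rewrite -scalemxAr; congr (_ *: _); by rewrite /LS_x !mulmxA.
Qed.

Lemma polyM i : (i <= d)%N ->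
  horner_mx A (LS_pp A Es i).1 *m F 0 = Mseq i /\
  horner_mx A (LS_pp A Es i).2 *m F 0 = Mprev i.
Proof.
elim: i => [|i IH] id /=.
  by rewrite rmorph1 rmorph0 mul1mx mul0mx.
have := IH (ltnW id); case: (LS_pp A Es i) => pk pk1 /= [H1 H2]; split => //.
rewrite rmorphB rmorphM /= linearZ /= rmorphB /= horner_mx_X horner_mx_C.
rewrite -mulmxE (mulmxBl (_ *m _)) -scalemxAl -mulmxA H1 H2 mulmxBl mul_scalar_mx -/Mseq AM //.
by rewrite addrAC !addrK.
Qed.

Lemma polyN i : (i <= d)%N ->
  F 0 *m horner_mx A (LS_pp A Es i).1 = Nseq i /\
  F 0 *m horner_mx A (LS_pp A Es i).2 = Nprev i.
Proof.
elim: i => [|i IH] id /=.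
  by rewrite rmorph1 rmorph0 mulmx1 mulmx0.
have := IH (ltnW id); case: (LS_pp A Es i) => pk pk1 /= [H1 H2]; split => //.
rewrite mulrC rmorphB rmorphM /= linearZ /= rmorphB /= horner_mx_X horner_mx_C.
rewrite -mulmxE (mulmxBr _ (_ *m _)) -scalemxAr mulmxA H1 H2 mulmxBr mul_mx_scalar {1}(NA i id).
by rewrite addrAC !addrK.
Qed.

Lemma prodMN i : (i <= d)%N ->
  Mseq i *m Nseq i = (\prod_(1 <= k < i.+1) LS_x A Es k) *: F i.
Proof.
elim: i => [|i IH] id /=.
  by rewrite Hidem big_geq // scale1r.
rewrite !mulmxA -(mulmxA _ (Mseq i)) -(mulmxA _ (Mseq i *m Nseq i)).
rewrite -(mulmxA (F i.+1 *m A)) IH 1?ltnW // -!scalemxAl -scalemxAr.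
rewrite !mulmxA -(mulmxA (F i.+1)) -(mulmxA (F i.+1)) Hsand.
rewrite (big_nat_recr i.+1) //= scalerA; congr (_ *: _); congr (_ * _).
by rewrite /LS_x !mulmxA.
Qed.

Lemma xnz k : (1 <= k <= d)%N -> LS_x A Es k != 0.
Proof.
case: k => // k /andP [_ kd]; apply/negP => /eqP x0.
have := Tx k; rewrite x0 scale0r => H.
have [n1 n2] := trinz k kd.
have n2' : F k.+1 *m (A *m F k) != 0 by rewrite mulmxA.
have := @Hnz _ _ _ _ _ n1 n2'; by rewrite !mulmxA H eqxx => /negP.
Qed.

Lemma main_sec : (forall k : nat, (1 <= k <= d)%N -> LS_x A Es k != 0) /\
  (forall i : 'I_(d.+1),
     Es i = (\prod_(1 <= k < i.+1) LS_x A Es k)^-1 *: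
            (horner_mx A (LS_p A Es i) *m Es ord0 *m horner_mx A (LS_p A Es i))).
Proof.
split; first exact: xnz.
move=> i; have ii : (i <= d)%N by rewrite -ltnS ltn_ord.
have [P1 _] := polyM i ii; have [P2 _] := polyN i ii.
have E0 : Es ord0 = F 0 by congr Es; apply/val_inj; rewrite /= inordK.
have -> : horner_mx A (LS_p A Es i) *m Es ord0 *m horner_mx A (LS_p A Es i)
          = Mseq i *m Nseq i.
  by rewrite -P1 -P2 E0 /LS_p mulmxA -(mulmxA _ (F 0) (F 0)) Hidem.
rewrite prodMN // scalerA mulVf ?scale1r ?inord_val //.
rewrite prodf_seq_neq0; apply/allP => k; rewrite mem_index_iota => /andP [k1 k2].
apply/implyP => _; apply: xnz; rewrite k1 /=; lia.
Qed.

End Main.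

Theorem theorem8p6 (K : fieldType) (d : nat) (A As : 'M[K]_(d.+1))
    (E Es : 'I_(d.+1) -> 'M[K]_(d.+1)) :
  leonard_system A As E Es ->
  (forall i : nat, (1 <= i <= d)%N -> LS_x A Es i != 0) /\
  (forall i : 'I_(d.+1),
     Es i = (\prod_(1 <= k < i.+1) LS_x A Es k)^-1 *:
            (horner_mx A (LS_p A Es i) *m Es ord0 *m horner_mx A (LS_p A Es i))).
Proof.
move=> [_ [_ [_ [HEs [_ Htri]]]]].
have [u [w [Hu Hw Hsum]]] := @rank1_decomp K d As Es HEs.
apply: (@main_sec K d A Es (@E_idem K d.+1 Es u w Hu Hw) (@E_sand K d.+1 Es u w Hu)
          Hsum Htri (@E_nz K d.+1 Es u w Hu)).
Qed.
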